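(* Let $C$ be a small category, $\mathbb{K}$ a presheaf on $C$, and $\top:1\to\mathbb{K}$ a global element. Let $\Gamma$ be a presheaf on $C$ and $\phi:\Gamma\to\mathbb{K}$ a morphism (a term $\Gamma\vdash\phi:\mathbb{K}$). Let $T$ be a type in context $\Gamma$ and $A$ a type in context $\Gamma.[\phi]$, and suppose $T$ restricted to $\Gamma.[\phi]$ is isomorphic to $A$, via mutually inverse morphisms $\alpha:A\to T$ and $\beta:T\to A$ of types over $\Gamma.[\phi]$. Then there is a type $\mathcal{T}(A,T,\phi)$ in context $\Gamma$, constructed uniformly from $(A,T,\phi,\alpha,\beta)$, such that: (1) the restriction of $\mathcal{T}(A,T,\phi)$ to $\Gamma.[\phi]$ is equal (strictly, as a presheaf) to $A$; (2) there is an isomorphism $\alpha':\mathcal{T}(A,T,\phi)\to T$, $\beta':T\to\mathcal{T}(A,T,\phi)$ of types over $\Gamma$ whose restrictions to $\Gamma.[\phi]$ are exactly $\alpha$ and $\beta$ respectively; (3) for every morphism $\rho:\Delta\to\Gamma$ of presheaves, the reindexing satisfies $\mathcal{T}(A,T,\phi)\rho=\mathcal{T}(A\rho,T\rho,\phi\rho)$ (where $\alpha,\beta$ are reindexed along the induced map $\Delta.[\phi\rho]\to\Gamma.[\phi]$).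
   Context: A type in context $\Gamma$ (a presheaf on $C$) is a presheaf on the category of elements $\int\Gamma$ (objects $(c,\gamma)$ with $\gamma\in\Gamma(c)$); reindexing along $\rho:\Delta\to\Gamma$ is precomposition with the induced functor $\int\Delta\to\int\Gamma$. For a type $A$ over $\Gamma$, $\Gamma.A$ is the presheaf $c\mapsto\{(\gamma,a)\mid\gamma\in\Gamma(c),a\in A(c,\gamma)\}$. $[\phi]$ denotes the type over $\Gamma$ with $[\phi](c,\gamma)=\{\star\}$ if $\phi_c(\gamma)=\top_c$ and $\emptyset$ otherwise (the identity type $\phi=\top$); so $\Gamma.[\phi]$ is the subpresheaf of $\Gamma$ where $\phi=\top$. *)

(* Defs.v *)
From Stdlib Require Import ProofIrrelevance FunctionalExtensionality.

Unset Implicit Arguments.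

Record Category := {
  Ob : Type;
  Hom : Ob -> Ob -> Type;
  idm : forall a, Hom a a;
  comp : forall a b c, Hom b c -> Hom a b -> Hom a c;
  comp_id_l : forall a b (f : Hom a b), comp a b b (idm b) f = f;
  comp_id_r : forall a b (f : Hom a b), comp a a b f (idm a) = f;
  comp_assoc : forall a b c d (h : Hom c d) (g : Hom b c) (f : Hom a b),
      comp a c d h (comp a b c g f) = comp a b d (comp b c d h g) f
}.
Arguments idm {_} a.
Arguments comp {_ a b c} _ _.

Record Functor (C D : Category) := {
  fob : Ob C -> Ob D;
  fhom : forall a b, Hom C a b -> Hom D (fob a) (fob b);
  fid : forall a, fhom a a (idm a) = idm (fob a);
  fcomp : forall a b c (g : Hom C b c) (f : Hom C a b),
      fhom a c (comp g f) = comp (fhom b c g) (fhom a b f)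
}.
Arguments fhom {_ _} _ {a b} _.
Arguments fob {_ _} _ _.
Arguments fid {_ _} _ a.
Arguments fcomp {_ _} _ {a b c} g f.
Arguments comp_id_l {_ a b} f.
Arguments comp_id_r {_ a b} f.
Arguments comp_assoc {_ a b c d} h g f.

Record Psh (C : Category) := {
  pobj : Ob C -> Type;
  pact : forall c d, Hom C d c -> pobj c -> pobj d;
  pact_id : forall c (x : pobj c), pact c c (idm c) x = x;
  pact_comp : forall c d e (f : Hom C d c) (g : Hom C e d) (x : pobj c),
      pact c e (comp f g) x = pact d e g (pact c d f x)
}.
Arguments pobj {_} _ _.
Arguments pact {_} _ {c d} _ _.
Arguments pact_id {_} _ {c} x.
Arguments pact_comp {_} _ {c d e} f g x.
Arguments Build_Psh {C} pobj pact pact_id pact_comp.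

Record NatTrans (C : Category) (X Y : Psh C) := {
  nt : forall c, pobj X c -> pobj Y c;
  nt_nat : forall c d (f : Hom C d c) (x : pobj X c),
      nt d (pact X f x) = pact Y f (nt c x)
}.
Arguments nt {_ _ _} _ c _.
Arguments NatTrans {C} X Y.
Arguments nt_nat {_ _ _} _ {c d} f x.
Arguments Build_NatTrans {C X Y} nt nt_nat.

Definition ntcomp {C : Category} {X Y Z : Psh C}
  (f : NatTrans X Y) (g : NatTrans Y Z) : NatTrans X Z.
Proof.
  refine (@Build_NatTrans C X Z (fun c x => nt g c (nt f c x)) _).
  intros c d h x. rewrite (nt_nat f), (nt_nat g). reflexivity.
Defined.

Definition Psh1 (C : Category) : Psh C.
Proof.
  refine {| pobj := fun _ => unit; pact := fun _ _ _ x => x |};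
  reflexivity.
Defined.

Definition ElHom {C : Category} (G : Psh C)
  (x y : {c : Ob C & pobj G c}) : Type :=
  { f : Hom C (projT1 x) (projT1 y) | pact G f (projT2 y) = projT2 x }.

Lemma ElHom_eq {C : Category} (G : Psh C) x y (f g : ElHom G x y) :
  proj1_sig f = proj1_sig g -> f = g.
Proof.
  destruct f as [f p], g as [g q]; simpl; intros e; subst g.
  f_equal; apply proof_irrelevance.
Qed.

Definition El_comp {C : Category} (G : Psh C) x y z
  (g : ElHom G y z) (f : ElHom G x y) : ElHom G x z.
Proof.
  refine (exist _ (comp (proj1_sig g) (proj1_sig f)) _).
  destruct g as [g pg], f as [f pf]; simpl.
  rewrite (pact_comp G), pg, pf. reflexivity.
Defined.

Definition Elements {C : Category} (G : Psh C) : Category.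
Proof.
  refine {| Ob := {c : Ob C & pobj G c};
            Hom := ElHom G;
            idm := fun x => exist _ (idm (projT1 x)) (pact_id G (projT2 x));
            comp := El_comp G |}.
  - intros; apply ElHom_eq; simpl; apply comp_id_l.
  - intros; apply ElHom_eq; simpl; apply comp_id_r.
  - intros; apply ElHom_eq; simpl; apply comp_assoc.
Defined.

Definition precomp {C D : Category} (P : Psh D) (F : Functor C D) : Psh C.
Proof.
  refine {| pobj := fun c => pobj P (fob F c);
            pact := fun c d f x => pact P (fhom F f) x |}.
  - intros c x; simpl. rewrite (fid F). apply pact_id.
  - intros c d e f g x; simpl. rewrite (fcomp F). apply pact_comp.
Defined.

Definition el_fob {C : Category} {D G : Psh C} (rho : NatTrans D G)
  (x : {c : Ob C & pobj D c}) : {c : Ob C & pobj G c} :=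
  existT _ (projT1 x) (nt rho _ (projT2 x)).

Definition el_fhom {C : Category} {D G : Psh C} (rho : NatTrans D G) x y
  (f : ElHom D x y) : ElHom G (el_fob rho x) (el_fob rho y).
Proof.
  refine (exist _ (proj1_sig f) _).
  destruct f as [f pf]; simpl. rewrite <- (nt_nat rho), pf. reflexivity.
Defined.

Definition el_fun {C : Category} {D G : Psh C} (rho : NatTrans D G) :
  Functor (Elements D) (Elements G).
Proof.
  refine (@Build_Functor (Elements D) (Elements G) (el_fob rho) (el_fhom rho) _ _).
  - intros; apply ElHom_eq; reflexivity.
  - intros; apply ElHom_eq; reflexivity.
Defined.

Definition Ty {C : Category} (G : Psh C) : Type := Psh (Elements G).

Definition reindex {C : Category} {D G : Psh C} (rho : NatTrans D G)
  (A : Ty G) : Ty D := precomp A (el_fun rho).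

Definition ext_hom {C : Category} (G : Psh C) c d (f : Hom C d c)
  (g : pobj G c) : ElHom G (existT _ d (pact G f g)) (existT _ c g) :=
  exist _ f eq_refl.
Arguments ext_hom {C} G {c d} f g.

Definition ctx_ext {C : Category} (G : Psh C) (A : Ty G) : Psh C.
Proof.
  refine {| pobj := fun c => {g : pobj G c & pobj A (existT _ c g)};
            pact := fun c d f x =>
              existT _ (pact G f (projT1 x))
                     (pact A (ext_hom G f (projT1 x)) (projT2 x)) |}.
  - intros c [g a]; simpl.
    assert (H : forall g' (p : pact G (idm c) g = g'), g' = g ->
               existT (fun g0 => pobj A (existT _ c g0)) g'
                 (pact A (exist (fun f : Hom C c c => pact G f g = g')
                              (idm c) p : ElHom G (existT _ c g') (existT _ c g)) a)
               = existT _ g a).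
    { intros g' p e. revert p. rewrite e. intro p.
      replace (exist (fun f : Hom C c c => pact G f g = g) (idm c) p)
        with (@idm (Elements G) (existT _ c g))
        by (apply ElHom_eq; reflexivity).
      rewrite (pact_id A). reflexivity. }
    apply H. apply pact_id.
  - intros c d e f h [g a]; simpl.
    assert (H : forall g' (p : pact G (comp f h) g = g'),
               g' = pact G h (pact G f g) ->
               existT (fun g0 => pobj A (existT _ e g0)) g'
                 (pact A (exist (fun k : Hom C e c => pact G k g = g')
                              (comp f h) p : ElHom G (existT _ e g') (existT _ c g)) a)
               = existT _ (pact G h (pact G f g))
                   (pact A (ext_hom G h (pact G f g))
                      (pact A (ext_hom G f g) a))).
    { intros g' p q. revert p. rewrite q. intro p.
      rewrite <- (pact_comp A).
      f_equal. f_equal. apply (@ElHom_eq C G (existT _ e (pact G h (pact G f g))) (existT _ c g)). reflexivity. }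
    apply H. apply pact_comp.
Defined.

Definition ctx_proj {C : Category} (G : Psh C) (A : Ty G) :
  NatTrans (ctx_ext G A) G.
Proof.
  refine (@Build_NatTrans C (ctx_ext G A) G (fun c x => projT1 x) _). reflexivity.
Defined.

(** * The cofibration-style type [phi] (identity type phi = top) *)
Section Cof.
Context {C : Category} (K : Psh C) (top : NatTrans (Psh1 C) K).

Definition cof_obj {G : Psh C} (phi : NatTrans G K)
  (x : {c : Ob C & pobj G c}) : Prop :=
  nt phi (projT1 x) (projT2 x) = nt top (projT1 x) tt.

Definition cof_act {G : Psh C} (phi : NatTrans G K)
  (x y : {c : Ob C & pobj G c}) (f : ElHom G y x) (h : cof_obj phi x) :
  cof_obj phi y.
Proof.
  destruct x as [c g], y as [d g'], f as [f pf]; unfold cof_obj in *; simpl in *.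
  subst g'. rewrite (nt_nat phi), h.
  exact (eq_sym (nt_nat top f tt)).
Defined.

Definition cof {G : Psh C} (phi : NatTrans G K) : Ty G.
Proof.
  refine (@Build_Psh (Elements G) (cof_obj phi) (cof_act phi) _ _).
  - intros; apply proof_irrelevance.
  - intros; apply proof_irrelevance.
Defined.

Definition ext_cof {G : Psh C} (phi : NatTrans G K) : Psh C :=
  ctx_ext G (cof phi).

Definition restr {G : Psh C} (phi : NatTrans G K) (T : Ty G) : Ty (ext_cof phi) :=
  reindex (ctx_proj G (cof phi)) T.

Definition reindex_nt {D G : Psh C} (rho : NatTrans D G) {A B : Ty G}
  (f : NatTrans A B) : NatTrans (reindex rho A) (reindex rho B).
Proof.
  refine (@Build_NatTrans _ (reindex rho A) (reindex rho B)
    (fun x a => nt f (fob (el_fun rho) x) a) _).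
  intros x y h a. simpl. apply (nt_nat f).
Defined.

Definition cof_sub {D G : Psh C} (rho : NatTrans D G) (phi : NatTrans G K) :
  NatTrans (ext_cof (ntcomp rho phi)) (ext_cof phi).
Proof.
  refine (@Build_NatTrans C (ext_cof (ntcomp rho phi)) (ext_cof phi)
    (fun c x => existT _ (nt rho c (projT1 x)) (projT2 x)) _).
  intros c d f [g h]; simpl.
  assert (H : forall g1 g2 (e : g1 = g2)
               (h1 : cof_obj phi (existT _ d g1))
               (h2 : cof_obj phi (existT _ d g2)),
             existT (fun g0 => cof_obj phi (existT _ d g0)) g1 h1
             = existT (fun g0 => cof_obj phi (existT _ d g0)) g2 h2).
  { intros g1 g2 e h1 h2. subst g2. f_equal. apply proof_irrelevance. }
  apply H. apply (nt_nat rho).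
Defined.

Definition reindex_alpha {D G : Psh C} (rho : NatTrans D G)
  (phi : NatTrans G K) {T : Ty G} {A : Ty (ext_cof phi)}
  (a : NatTrans A (restr phi T)) :
  NatTrans (reindex (cof_sub rho phi) A) (restr (ntcomp rho phi) (reindex rho T)).
Proof.
  refine (@Build_NatTrans _ (reindex (cof_sub rho phi) A) (restr (ntcomp rho phi) (reindex rho T))
    (fun x u => nt a (fob (el_fun (cof_sub rho phi)) x) u) _).
  intros x y h u. simpl. rewrite (nt_nat a). simpl.
  f_equal. apply ElHom_eq. reflexivity.
Defined.

Definition reindex_beta {D G : Psh C} (rho : NatTrans D G)
  (phi : NatTrans G K) {T : Ty G} {A : Ty (ext_cof phi)}
  (b : NatTrans (restr phi T) A) :
  NatTrans (restr (ntcomp rho phi) (reindex rho T)) (reindex (cof_sub rho phi) A).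
Proof.
  refine (@Build_NatTrans _ (restr (ntcomp rho phi) (reindex rho T)) (reindex (cof_sub rho phi) A)
    (fun x u => nt b (fob (el_fun (cof_sub rho phi)) x) u) _).
  intros x y h u. simpl. rewrite <- (nt_nat b). simpl.
  f_equal. f_equal. apply ElHom_eq. reflexivity.
Defined.

End Cof.

Definition is_iso {C : Category} {X Y : Psh C} (a : NatTrans X Y)
  (b : NatTrans Y X) : Prop :=
  (forall c x, nt b c (nt a c x) = x) /\ (forall c y, nt a c (nt b c y) = y).

(* Main.v *)
Require Import Defs.
From Stdlib Require Import ProofIrrelevance FunctionalExtensionality ClassicalEpsilon.

Definition cast {X Y : Type} (e : X = Y) (a : X) : Y := eq_rect X (fun Z => Z) a Y e.

Lemma cast_refl {X : Type} (e : X = X) (a : X) : cast e a = a.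
Proof. rewrite (proof_irrelevance _ e eq_refl). reflexivity. Qed.

Lemma Psh_eq_pt {C : Category} (P Q : Psh C) (e : forall x, pobj P x = pobj Q x)
  (H : forall c d (f : Hom C d c) a, cast (e d) (pact P f a) = pact Q f (cast (e c) a)) :
  P = Q.
Proof.
  destruct P as [o1 a1 i1 c1], Q as [o2 a2 i2 c2]; simpl in *.
  assert (E : o1 = o2) by (apply functional_extensionality_dep; exact e).
  subst o2.
  assert (E : a1 = a2).
  { apply functional_extensionality_dep; intro c.
    apply functional_extensionality_dep; intro d.
    apply functional_extensionality_dep; intro f.
    apply functional_extensionality_dep; intro a.
    specialize (H c d f a). rewrite !cast_refl in H. exact H. }
  subst a2. f_equal; apply proof_irrelevance.
Qed.

Lemma NatTrans_eq {C : Category} {X Y : Psh C} (n1 n2 : NatTrans X Y) :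
  (forall c x, nt n1 c x = nt n2 c x) -> n1 = n2.
Proof.
  destruct n1 as [f1 p1], n2 as [f2 p2]; simpl; intro H.
  assert (f1 = f2).
  { apply functional_extensionality_dep; intro c; apply functional_extensionality; apply H. }
  subst f2. f_equal; apply proof_irrelevance.
Qed.

Lemma transport_src {C : Category} {P Q Y : Psh C} (E : P = Q)
  (e : forall x, pobj P x = pobj Q x) (n : NatTrans P Y) x a :
  nt (eq_rect P (fun X => NatTrans X Y) n Q E) x (cast (e x) a) = nt n x a.
Proof. destruct E. rewrite cast_refl. reflexivity. Qed.

Lemma transport_tgt {C : Category} {P Q Y : Psh C} (E : P = Q)
  (e : forall x, pobj P x = pobj Q x) (n : NatTrans Y P) x a :
  nt (eq_rect P (fun X => NatTrans Y X) n Q E) x a = cast (e x) (nt n x a).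
Proof. destruct E. rewrite cast_refl. reflexivity. Qed.

Definition em (P : Prop) : {P} + {~ P} := excluded_middle_informative P.

Lemma sigT_prop_eq {A : Type} (B : A -> Prop) (g1 g2 : A) (e : g1 = g2) (h1 : B g1) (h2 : B g2) :
  existT B g1 h1 = existT B g2 h2.
Proof. subst g2. f_equal. apply proof_irrelevance. Qed.

Definition dec {C : Category} (K : Psh C) (top : NatTrans (Psh1 C) K) {G : Psh C}
  (phi : NatTrans G K) (x : {c : Ob C & pobj G c}) : Type :=
  {cof_obj K top phi x} + {~ cof_obj K top phi x}.

Definition Fobj' {C : Category} (K : Psh C) (top : NatTrans (Psh1 C) K) {G : Psh C}
  (phi : NatTrans G K) (T : Ty G) (A : Ty (ext_cof K top phi))
  (c : Ob C) (g : pobj G c) (s : dec K top phi (existT _ c g)) : Type :=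
  match s with
  | left p => pobj A (existT _ c (existT _ g p))
  | right _ => pobj T (existT _ c g)
  end.

Definition ehom {C : Category} (K : Psh C) (top : NatTrans (Psh1 C) K) {G : Psh C}
  (phi : NatTrans G K) c g d g' (f : ElHom G (existT _ d g') (existT _ c g))
  (px : cof_obj K top phi (existT _ c g)) (py : cof_obj K top phi (existT _ d g')) :
  Hom (Elements (ext_cof K top phi))
    (existT _ d (existT _ g' py))
    (existT _ c (existT _ g px)).
Proof.
  refine (exist _ (proj1_sig f) _).
  simpl. apply (sigT_prop_eq (fun g0 => cof_obj K top phi (existT _ d g0))).
  exact (proj2_sig f).
Defined.

Definition act' {C : Category} (K : Psh C) (top : NatTrans (Psh1 C) K) {G : Psh C}
  (phi : NatTrans G K) (T : Ty G) (A : Ty (ext_cof K top phi))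
  (alpha : NatTrans A (restr K top phi T)) (beta : NatTrans (restr K top phi T) A)
  c g d g' (f : ElHom G (existT _ d g') (existT _ c g))
  (sx : dec K top phi (existT _ c g)) (sy : dec K top phi (existT _ d g')) :
  Fobj' K top phi T A c g sx -> Fobj' K top phi T A d g' sy :=
  match sx as sx0, sy as sy0 return Fobj' K top phi T A c g sx0 -> Fobj' K top phi T A d g' sy0 with
  | left px, left py => fun a => pact A (ehom K top phi c g d g' f px py) a
  | left px, right ny => fun a => False_rect _ (ny (cof_act K top phi _ _ f px))
  | right _, left py => fun a => nt beta (existT _ d (existT _ g' py)) (pact T f a)
  | right _, right _ => fun a => pact T f a
  end.

Lemma act_id {C : Category} (K : Psh C) (top : NatTrans (Psh1 C) K) {G : Psh C}
  (phi : NatTrans G K) (T : Ty G) (A : Ty (ext_cof K top phi))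
  alpha beta c g (sx : dec K top phi (existT _ c g)) a :
  act' K top phi T A alpha beta c g c g (@idm (Elements G) (existT _ c g)) sx sx a = a.
Proof.
  destruct sx as [px|nx]; simpl.
  - rewrite <- (pact_id A a) at 2. f_equal. apply ElHom_eq. reflexivity.
  - exact (pact_id T (c:=existT _ c g) a).
Qed.


Lemma act_comp {C : Category} (K : Psh C) (top : NatTrans (Psh1 C) K) {G : Psh C}
  (phi : NatTrans G K) (T : Ty G) (A : Ty (ext_cof K top phi))
  alpha beta c g d g' e g''
  (f : ElHom G (existT _ d g') (existT _ c g)) (h : ElHom G (existT _ e g'') (existT _ d g'))
  sx sy sz a :
  act' K top phi T A alpha beta c g e g'' (@comp (Elements G) (existT _ e g'') (existT _ d g') (existT _ c g) f h) sx sz a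
  = act' K top phi T A alpha beta d g' e g'' h sy sz (act' K top phi T A alpha beta c g d g' f sx sy a).
Proof.
  destruct sx as [px|nx], sy as [py|ny], sz as [pz|nz]; simpl.
  - rewrite <- (pact_comp A). f_equal. apply ElHom_eq. reflexivity.
  - exfalso; apply nz. exact (cof_act K top phi _ _ h py).
  - exfalso; apply ny. exact (cof_act K top phi _ _ f px).
  - exfalso; apply ny. exact (cof_act K top phi _ _ f px).
  - etransitivity; [| apply (nt_nat beta)]. simpl. f_equal.
    etransitivity; [exact (pact_comp T f h a)|]. f_equal. apply ElHom_eq. reflexivity.
  - exfalso; apply nz. exact (cof_act K top phi _ _ h py).
  - f_equal. exact (pact_comp T f h a).
  - exact (pact_comp T f h a).
Qed.

Definition Fcon {C : Category} (K : Psh C) (top : NatTrans (Psh1 C) K) {G : Psh C}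
  (phi : NatTrans G K) (T : Ty G) (A : Ty (ext_cof K top phi))
  (alpha : NatTrans A (restr K top phi T)) (beta : NatTrans (restr K top phi T) A) : Ty G.
Proof.
  refine (@Build_Psh (Elements G)
    (fun x => Fobj' K top phi T A (projT1 x) (projT2 x) (em _))
    (fun x y f => act' K top phi T A alpha beta (projT1 x) (projT2 x) (projT1 y) (projT2 y) f (em _) (em _)) _ _).
  - intros [c g] a. apply act_id.
  - intros [c g] [d g'] [e g''] f h a. apply act_comp.
Defined.

Definition toT {C : Category} (K : Psh C) (top : NatTrans (Psh1 C) K) {G : Psh C}
  (phi : NatTrans G K) (T : Ty G) (A : Ty (ext_cof K top phi))
  (alpha : NatTrans A (restr K top phi T)) c g (s : dec K top phi (existT _ c g)) :
  Fobj' K top phi T A c g s -> pobj T (existT _ c g) :=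
  match s as s0 return Fobj' K top phi T A c g s0 -> pobj T (existT _ c g) with
  | left p => fun a => nt alpha (existT _ c (existT _ g p)) a
  | right _ => fun a => a
  end.

Definition fromT {C : Category} (K : Psh C) (top : NatTrans (Psh1 C) K) {G : Psh C}
  (phi : NatTrans G K) (T : Ty G) (A : Ty (ext_cof K top phi))
  (beta : NatTrans (restr K top phi T) A) c g (s : dec K top phi (existT _ c g)) :
  pobj T (existT _ c g) -> Fobj' K top phi T A c g s :=
  match s as s0 return pobj T (existT _ c g) -> Fobj' K top phi T A c g s0 with
  | left p => fun a => nt beta (existT _ c (existT _ g p)) a
  | right _ => fun a => a
  end.

Lemma toT_nat {C : Category} (K : Psh C) (top : NatTrans (Psh1 C) K) {G : Psh C}
  (phi : NatTrans G K) (T : Ty G) (A : Ty (ext_cof K top phi))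
  (alpha : NatTrans A (restr K top phi T)) (beta : NatTrans (restr K top phi T) A)
  (H : is_iso alpha beta) c g d g' (f : ElHom G (existT _ d g') (existT _ c g)) sx sy a :
  toT K top phi T A alpha d g' sy (act' K top phi T A alpha beta c g d g' f sx sy a)
  = pact T f (toT K top phi T A alpha c g sx a).
Proof.
  destruct sx as [px|nx], sy as [py|ny]; simpl in *.
  - etransitivity; [exact (nt_nat alpha (ehom K top phi c g d g' f px py) a)|]. simpl. f_equal. apply ElHom_eq. reflexivity.
  - exfalso; apply ny. exact (cof_act K top phi _ _ f px).
  - exact (proj2 H (existT _ d (existT _ g' py)) (pact T f a)).
  - reflexivity.
Qed.

Lemma fromT_nat {C : Category} (K : Psh C) (top : NatTrans (Psh1 C) K) {G : Psh C}
  (phi : NatTrans G K) (T : Ty G) (A : Ty (ext_cof K top phi))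
  (alpha : NatTrans A (restr K top phi T)) (beta : NatTrans (restr K top phi T) A)
  c g d g' (f : ElHom G (existT _ d g') (existT _ c g)) sx sy a :
  fromT K top phi T A beta d g' sy (pact T f a)
  = act' K top phi T A alpha beta c g d g' f sx sy (fromT K top phi T A beta c g sx a).
Proof.
  destruct sx as [px|nx], sy as [py|ny]; simpl in *.
  - etransitivity; [|exact (nt_nat beta (ehom K top phi c g d g' f px py) a)]. simpl. f_equal. f_equal. apply ElHom_eq. reflexivity.
  - exfalso; apply ny. exact (cof_act K top phi _ _ f px).
  - reflexivity.
  - reflexivity.
Qed.

Definition alphaC {C : Category} (K : Psh C) (top : NatTrans (Psh1 C) K) {G : Psh C}
  (phi : NatTrans G K) (T : Ty G) (A : Ty (ext_cof K top phi))
  (alpha : NatTrans A (restr K top phi T)) (beta : NatTrans (restr K top phi T) A)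
  (H : is_iso alpha beta) : NatTrans (Fcon K top phi T A alpha beta) T.
Proof.
  refine (@Build_NatTrans _ (Fcon K top phi T A alpha beta) T
    (fun x => match x as x0 return pobj (Fcon K top phi T A alpha beta) x0 -> pobj T x0 with
              existT _ c g => toT K top phi T A alpha c g (em _) end) _).
  intros [c g] [d g'] f a. apply toT_nat; exact H.
Defined.

Definition betaC {C : Category} (K : Psh C) (top : NatTrans (Psh1 C) K) {G : Psh C}
  (phi : NatTrans G K) (T : Ty G) (A : Ty (ext_cof K top phi))
  (alpha : NatTrans A (restr K top phi T)) (beta : NatTrans (restr K top phi T) A)
  : NatTrans T (Fcon K top phi T A alpha beta).
Proof.
  refine (@Build_NatTrans _ T (Fcon K top phi T A alpha beta)
    (fun x => match x as x0 return pobj T x0 -> pobj (Fcon K top phi T A alpha beta) x0 with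
              existT _ c g => fromT K top phi T A beta c g (em _) end) _).
  intros [c g] [d g'] f a. apply fromT_nat.
Defined.

Definition idnt {C : Category} (X : Psh C) : NatTrans X X :=
  @Build_NatTrans C X X (fun c x => x) (fun c d f x => eq_refl).

Definition Fdef {C : Category} (K : Psh C) (top : NatTrans (Psh1 C) K) (G : Psh C)
  (phi : NatTrans G K) (T : Ty G) (A : Ty (ext_cof K top phi))
  (alpha : NatTrans A (restr K top phi T)) (beta : NatTrans (restr K top phi T) A) : Ty G :=
  match em (is_iso alpha beta) with
  | left _ => Fcon K top phi T A alpha beta
  | right _ => T
  end.

Definition alphaD {C : Category} (K : Psh C) (top : NatTrans (Psh1 C) K) (G : Psh C)
  (phi : NatTrans G K) (T : Ty G) (A : Ty (ext_cof K top phi))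
  (alpha : NatTrans A (restr K top phi T)) (beta : NatTrans (restr K top phi T) A) :
  NatTrans (Fdef K top G phi T A alpha beta) T :=
  match em (is_iso alpha beta) as s
    return NatTrans (match s with left _ => Fcon K top phi T A alpha beta | right _ => T end) T with
  | left H => alphaC K top phi T A alpha beta H
  | right _ => idnt T
  end.

Definition betaD {C : Category} (K : Psh C) (top : NatTrans (Psh1 C) K) (G : Psh C)
  (phi : NatTrans G K) (T : Ty G) (A : Ty (ext_cof K top phi))
  (alpha : NatTrans A (restr K top phi T)) (beta : NatTrans (restr K top phi T) A) :
  NatTrans T (Fdef K top G phi T A alpha beta) :=
  match em (is_iso alpha beta) as s
    return NatTrans T (match s with left _ => Fcon K top phi T A alpha beta | right _ => T end) with
  | left H => betaC K top phi T A alpha beta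
  | right _ => idnt T
  end.

Definition eq_obj {C : Category} (K : Psh C) (top : NatTrans (Psh1 C) K) {G : Psh C}
  (phi : NatTrans G K) (T : Ty G) (A : Ty (ext_cof K top phi)) c g p
  (s : dec K top phi (existT _ c g)) :
  Fobj' K top phi T A c g s = pobj A (existT _ c (existT _ g p)).
Proof.
  destruct s as [p'|n]; simpl.
  - rewrite (proof_irrelevance _ p' p). reflexivity.
  - contradiction.
Defined.

Definition eR {C : Category} (K : Psh C) (top : NatTrans (Psh1 C) K) {G : Psh C}
  (phi : NatTrans G K) (T : Ty G) (A : Ty (ext_cof K top phi)) alpha beta
  (x : {c : Ob C & pobj (ext_cof K top phi) c}) :
  pobj (restr K top phi (Fcon K top phi T A alpha beta)) x = pobj A x.
Proof.
  destruct x as [c [g p]]. exact (eq_obj K top phi T A c g p (em _)).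
Defined.

Lemma key_restr {C : Category} (K : Psh C) (top : NatTrans (Psh1 C) K) {G : Psh C}
  (phi : NatTrans G K) (T : Ty G) (A : Ty (ext_cof K top phi)) alpha beta c g p d g' q
  (f : Hom (Elements (ext_cof K top phi)) (existT _ d (existT _ g' q)) (existT _ c (existT _ g p)))
  sx sy a :
  cast (eq_obj K top phi T A d g' q sy)
    (act' K top phi T A alpha beta c g d g' (el_fhom (ctx_proj G (cof K top phi)) _ _ f) sx sy a)
  = pact A f (cast (eq_obj K top phi T A c g p sx) a).
Proof.
  destruct sx as [p'|n], sy as [q'|n']; try contradiction.
  assert (p' = p) by apply proof_irrelevance. subst p'.
  assert (q' = q) by apply proof_irrelevance. subst q'.
  simpl. rewrite !cast_refl. f_equal. apply ElHom_eq. reflexivity.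
Qed.

Lemma transport_src' {C : Category} {P Q Y : Psh C} (E : P = Q)
  (e : forall x, pobj P x = pobj Q x) (n : NatTrans P Y) x a :
  nt (eq_rect P (fun X => NatTrans X Y) n Q E) x a = nt n x (cast (eq_sym (e x)) a).
Proof. destruct E. rewrite cast_refl. reflexivity. Qed.

Lemma toT_cast {C : Category} (K : Psh C) (top : NatTrans (Psh1 C) K) {G : Psh C}
  (phi : NatTrans G K) (T : Ty G) (A : Ty (ext_cof K top phi)) alpha c g p s a :
  toT K top phi T A alpha c g s (cast (eq_sym (eq_obj K top phi T A c g p s)) a)
  = nt alpha (existT _ c (existT _ g p)) a.
Proof.
  destruct s as [p'|n]; try contradiction.
  assert (p' = p) by apply proof_irrelevance. subst p'. simpl. rewrite cast_refl. reflexivity.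
Qed.

Lemma fromT_cast {C : Category} (K : Psh C) (top : NatTrans (Psh1 C) K) {G : Psh C}
  (phi : NatTrans G K) (T : Ty G) (A : Ty (ext_cof K top phi)) beta c g p s a :
  cast (eq_obj K top phi T A c g p s) (fromT K top phi T A beta c g s a)
  = nt beta (existT _ c (existT _ g p)) a.
Proof.
  destruct s as [p'|n]; try contradiction.
  assert (p' = p) by apply proof_irrelevance. subst p'. simpl. rewrite cast_refl. reflexivity.
Qed.

Lemma toT_fromT {C : Category} (K : Psh C) (top : NatTrans (Psh1 C) K) {G : Psh C}
  (phi : NatTrans G K) (T : Ty G) (A : Ty (ext_cof K top phi)) alpha beta
  (H : is_iso alpha beta) c g s a :
  toT K top phi T A alpha c g s (fromT K top phi T A beta c g s a) = a.
Proof. destruct s as [p|n]; simpl; [exact (proj2 H (existT _ c (existT _ g p)) a)|reflexivity]. Qed.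

Lemma fromT_toT {C : Category} (K : Psh C) (top : NatTrans (Psh1 C) K) {G : Psh C}
  (phi : NatTrans G K) (T : Ty G) (A : Ty (ext_cof K top phi)) alpha beta
  (H : is_iso alpha beta) c g s a :
  fromT K top phi T A beta c g s (toT K top phi T A alpha c g s a) = a.
Proof. destruct s as [p|n]; simpl; [exact (proj1 H (existT _ c (existT _ g p)) a)|reflexivity]. Qed.

Lemma act_reindex {C : Category} (K : Psh C) (top : NatTrans (Psh1 C) K) {D G : Psh C}
  (rho : NatTrans D G) (phi : NatTrans G K) (T : Ty G) (A : Ty (ext_cof K top phi)) alpha beta
  c g d g' (f : ElHom D (existT _ d g') (existT _ c g))
  (sx : dec K top (ntcomp rho phi) (existT _ c g)) (sy : dec K top (ntcomp rho phi) (existT _ d g')) a :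
  act' K top phi T A alpha beta c (nt rho c g) d (nt rho d g') (el_fhom rho _ _ f) sx sy a
  = act' K top (ntcomp rho phi) (reindex rho T) (reindex (cof_sub K top rho phi) A)
      (reindex_alpha K top rho phi alpha) (reindex_beta K top rho phi beta) c g d g' f sx sy a.
Proof.
  destruct sx as [px|nx], sy as [py|ny]; simpl.
  - f_equal. apply ElHom_eq. reflexivity.
  - exfalso. apply ny. exact (cof_act K top (ntcomp rho phi) _ _ f px).
  - reflexivity.
  - reflexivity.
Qed.
Theorem mainTheorem1 (C : Category) (K : Psh C) (top : NatTrans (Psh1 C) K) :
  exists
    (F : forall (G : Psh C) (phi : NatTrans G K) (T : Ty G)
                (A : Ty (ext_cof K top phi)),
           NatTrans A (restr K top phi T) -> NatTrans (restr K top phi T) A ->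
           Ty G)
    (alpha' : forall G phi T A alpha beta,
                NatTrans (F G phi T A alpha beta) T)
    (beta' : forall G phi T A alpha beta,
                NatTrans T (F G phi T A alpha beta)),
    (forall (G : Psh C) (phi : NatTrans G K) (T : Ty G)
            (A : Ty (ext_cof K top phi))
            (alpha : NatTrans A (restr K top phi T))
            (beta : NatTrans (restr K top phi T) A),
        is_iso alpha beta ->
        (* (1) strict restriction, and (2) iso restricting to alpha, beta *)
        (exists e : restr K top phi (F G phi T A alpha beta) = A,
            eq_rect _ (fun X => NatTrans X (restr K top phi T))
              (reindex_nt (ctx_proj G (cof K top phi)) (alpha' G phi T A alpha beta))
              A e = alpha
         /\ eq_rect _ (fun X => NatTrans (restr K top phi T) X)
              (reindex_nt (ctx_proj G (cof K top phi)) (beta' G phi T A alpha beta))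
              A e = beta)
        /\ is_iso (alpha' G phi T A alpha beta) (beta' G phi T A alpha beta)
        (* (3) stability under reindexing *)
        /\ (forall (D : Psh C) (rho : NatTrans D G),
              reindex rho (F G phi T A alpha beta)
              = F D (ntcomp rho phi) (reindex rho T)
                  (reindex (cof_sub K top rho phi) A)
                  (reindex_alpha K top rho phi alpha)
                  (reindex_beta K top rho phi beta))).
Proof.
  exists (Fdef K top), (alphaD K top), (betaD K top).
  intros G phi T A alpha beta H.
  assert (Hr : forall (D : Psh C) (rho : NatTrans D G),
     is_iso (reindex_alpha K top rho phi alpha) (reindex_beta K top rho phi beta)).
  { intros D rho. split; intros x a; simpl; [exact (proj1 H (el_fob (cof_sub K top rho phi) x) a) | exact (proj2 H (el_fob (cof_sub K top rho phi) x) a)]. }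
  unfold Fdef, alphaD, betaD.
  destruct (em (is_iso alpha beta)) as [Hi|Hn]; [|contradiction].
  split; [|split].
  - assert (E : restr K top phi (Fcon K top phi T A alpha beta) = A).
    { apply (@Psh_eq_pt (Elements (ext_cof K top phi)) _ _ (eR K top phi T A alpha beta)).
      intros [c [g p]] [d [g' q]] f a. apply key_restr. }
    exists E. split.
    + apply NatTrans_eq. intros x a.
      rewrite (transport_src' E (eR K top phi T A alpha beta)).
      destruct x as [c [g p]]. simpl. apply toT_cast.
    + apply NatTrans_eq. intros x a.
      rewrite (transport_tgt E (eR K top phi T A alpha beta)).
      destruct x as [c [g p]]. simpl. apply fromT_cast.
  - split; intros [c g] a; simpl; [apply fromT_toT | apply toT_fromT]; exact Hi.
  - intros D rho.
    destruct (em (is_iso (reindex_alpha K top rho phi alpha) (reindex_beta K top rho phi beta)))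
      as [Hi'|Hn']; [|exfalso; apply Hn', Hr].
    refine (@Psh_eq_pt (Elements D) (reindex rho (Fcon K top phi T A alpha beta))
      (Fcon K top (ntcomp rho phi) (reindex rho T) (reindex (cof_sub K top rho phi) A)
         (reindex_alpha K top rho phi alpha) (reindex_beta K top rho phi beta)) (fun x => eq_refl) _).
    intros [c g] [d g'] f a. simpl. exact (act_reindex K top rho phi T A alpha beta c g d g' f (em _) (em _) a).
Qed.
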